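(* Let $\Lambda$ be a finite cubical complex, $k\ge1$, $q\ge2$ an integer, $x_{\mathbf{c}}\in(0,1)$ for $\mathbf{c}\in\Lambda_k$. Let $\Omega=\{0,1\}^{\Lambda_k}$, $\Sigma=\ker(\partial_k)\subset C_k$, $f:\Omega\to2^\Sigma$, $f(\omega)=\Sigma^\downarrow(\omega):=\{\eta\in\Sigma\mid\mathrm{supp}(\eta)\subset\omega\}$, and $$\rho[\omega]\propto\prod_{\mathbf{c}\in\Lambda_k(\omega)}\frac{x_{\mathbf{c}}}{1-x_{\mathbf{c}}}\ (\omega\in\Omega),\qquad\gamma[\eta]\propto1\ (\eta\in\Sigma).$$ Let $\mathscr{P}$ be the probability measure on $\Omega\times\Sigma$ with $\mathscr{P}[\omega,\eta]\propto\rho[\omega]\gamma[\eta]\mathbf{1}[\eta\in f(\omega)]$. Then: (a) The marginal $\mathscr{P}_\Sigma$ equals $\ell^q_{\Lambda_k,x}$, and for $\omega\in\Omega$ the conditional measure $\mathscr{P}[\cdot\mid\omega]$ is uniform on $\Sigma^\downarrow(\omega)$. (b) The marginal $\mathscr{P}_\Omega$ equals $\phi^q_{\Lambda_k,p}$ with $p$ determined by $x_{\mathbf{c}}=\frac{p_{\mathbf{c}}}{p_{\mathbf{c}}+q(1-p_{\mathbf{c}})}$. For each $\eta\in\Sigma$, $\mathscr{P}[\cdot\mid\eta]=\mathbb{P}_x\cup\delta_{\mathrm{supp}(\eta)}$, Bernoulli percolation on $\Lambda_k$ with parameters $(x_{\mathbf{c}})$ conditioned on all $k$-cells of $\mathrm{supp}(\eta)$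 being open.
   Context: A finite cubical complex $\Lambda$ consists of finite sets $\Lambda_j$ of $j$-cells (copies of $\{0,1\}^j$) closed under taking faces; $F_i^\pm(\mathbf{c})$ are the faces $\{x_i=1\},\{x_i=0\}$ of a $j$-cell. Each $j$-cell ($j\ge1$) has two orientations (for $j\ge2$ an ordering $e_1\wedge\dots\wedge e_j$ of the cell's edges at a root vertex $v$ modulo even permutations, reversed when moving the root across an edge; faces $F_i^\pm(\mathfrak{c})$ containing $v$ inherit $e_1\wedge\cdots\wedge\widehat{e_i}\wedge\cdots\wedge e_j$ rooted at $v$; for $j=1$ the orientations $(v,w),(w,v)$). $C_j=\{\sigma\in(\mathbb{Z}/q\mathbb{Z})^{\mathcal{O}(\Lambda_j)}\mid\sigma_{-\mathfrak{c}}=-\sigma_{\mathfrak{c}}\}$, $C_0=(\mathbb{Z}/q\mathbb{Z})^{\Lambda_0}$; $\partial_j:C_j\to C_{j-1}$ is linear with $\partial_j\mathbf{1}^{\mathfrak{c}}=\sum_{i=1}^j(-1)^{i+1}(\mathbf{1}^{F_i^+(\mathfrak{c})}-\mathbf{1}^{F_i^-(\mathfrak{c})})$ ($j\ge2$), $\partial_1\mathbf{1}^{(v,w)}=\mathbf{1}_w-\mathbf{1}_v$, $\partial_0:=0$. $\mathrm{supp}(\eta)$ is the set of $k$-cells on which $\eta$ is nonzero. The $q$-flow model is $\ell^q_{\Lambda_k,x}[\eta]\propto\prod_{\mathbf{c}\in\mathrm{supp}(\eta)}x_{\mathbf{c}}$ on $\ker(\partial_k)$. Elements $\omega\in\{0,1\}^{\Lambda_k}$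 are identified with $k$-spanning subcomplexes (all cells of dimension $<k$, the $k$-cells $\Lambda_k(\omega)$, nothing higher); $\partial^\omega_k$ is $\partial_k$ restricted to chains supported on $\Lambda_k(\omega)$, $\partial^\omega_{k-1}=\partial_{k-1}$, and $\phi^q_{\Lambda_k,p}[\omega]\propto\frac{|\ker(\partial^\omega_{k-1})|}{|\mathrm{Im}(\partial^\omega_k)|}\prod_{\mathbf{c}\in\Lambda_k(\omega)}\frac{p_{\mathbf{c}}}{1-p_{\mathbf{c}}}$. $\mathbb{P}_x$ is Bernoulli percolation on $\Lambda_k$; $\pi\cup\nu$ is the law of the union of independent samples; $\delta$ is a Dirac mass. *)

(* Defs.v *)
From HB Require Import structures.
From mathcomp Require Import all_boot all_order all_algebra.
From mathcomp Require Import perm.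
Set Implicit Arguments. Unset Strict Implicit. Unset Printing Implicit Defensive.
Import Order.TTheory GRing.Theory Num.Theory.
Local Open Scope ring_scope.

(* A j-cell is an embedded copy of {0,1}^j in a finite vertex set V,    *)
(* i.e. an injective "parametrisation" sigma : {0,1}^j -> V, considered *)
(* up to the automorphisms of the cube (the hyperoctahedral group).     *)
(* Orientations: the orientation carried by a parametrisation sigma is  *)
(* e_1 /\ ... /\ e_j rooted at sigma(0); precomposing with a cube       *)
(* automorphism g changes it by sign g = det g (sign of the coordinate  *)
(* permutation times (-1)^(number of reflected coordinates)), matching  *)
(* the rule: modulo even permutations, reversed when moving the root    *)
(* across an edge.                                                      *)

Section Cubical.
Variable V : finType.

Definition param (j : nat) := {ffun {ffun 'I_j -> bool} -> V}.

Definition aut (j : nat) := ({perm 'I_j} * {ffun 'I_j -> bool})%type.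

Definition act j (s : param j) (g : aut j) : param j :=
  [ffun x : {ffun 'I_j -> bool} => s [ffun i => addb (x (g.1 i)) (g.2 i)]].

(* the face F_(i+1)^e = {x_(i+1) = e} of a (j+1)-cell (i is 0-based),
   with its inherited parametrisation *)
Definition face j (s : param j.+1) (i : 'I_j.+1) (e : bool) : param j :=
  [ffun x : {ffun 'I_j -> bool} =>
     s [ffun m : 'I_j.+1 => if unlift i m is Some m' then x m' else e]].

Definition orbit j (s : param j) : {set param j} := [set act s g | g : aut j].

(* Lambda j = the set of parametrisations of j-cells of the complex *)
Definition is_cubical_complex (L : forall j, {set param j}) : Prop :=
  [/\ (forall j (s : param j), s \in L j -> injective s),
      (forall j (s : param j) (g : aut j), s \in L j -> act s g \in L j) &
      (forall j (s : param j.+1) (i : 'I_j.+1) (e : bool),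
          s \in L j.+1 -> face s i e \in L j)].

Definition cells (L : forall j, {set param j}) j : {set {set param j}} :=
  [set orbit s | s in L j].

Definition cellT (L : forall j, {set param j}) j :=
  {O : {set param j} | O \in cells L j}.

Section Chains.
Variable q : nat.
Variable L : forall j, {set param j}.

Definition chain j := {ffun param j -> 'Z_q}.

Definition sign j (g : aut j) : 'Z_q :=
  (-1) ^+ (odd_perm g.1 + #|[set i | g.2 i]|)%N.

(* C_j : antisymmetric functions on oriented j-cells *)
Definition is_chain j (f : chain j) : bool :=
  [forall s, (s \notin L j) ==> (f s == 0)] &&
  [forall s, forall g : aut j, f (act s g) == sign g * f s].

Definition ind j (s : param j) : chain j :=
  [ffun t => \sum_(g : aut j | act s g == t) sign g].

Definition bd_basis j (s : param j.+1) : chain j :=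
  [ffun t => \sum_(i < j.+1)
               (-1) ^+ i * (ind (face s i true) t - ind (face s i false) t)].

Definition is_rep j (s : param j) : bool := [pick t in orbit s] == Some s.

Definition bdS j (f : chain j.+1) : chain j :=
  [ffun t => \sum_(s in L j.+1 | is_rep s) f s * bd_basis s t].

(* partial_n : C_n -> C_(n-1), with partial_0 := 0 *)
Definition bd n : chain n -> chain n.-1 :=
  match n as m return chain m -> chain m.-1 with
  | 0 => fun _ => 0
  | j.+1 => @bdS j
  end.

Definition supp j (f : chain j) : {set cellT L j} :=
  [set c : cellT L j | [exists s in val c, f s != 0]].

Definition kerbd n : {set chain n} := [set f : chain n | is_chain f && (bd f == 0)].

Definition Sigma k := kerbd k.

Definition Sigma_down k (w : {set cellT L k}) : {set chain k} :=
  [set eta in Sigma k | supp eta \subset w].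

Definition Im_bd k (w : {set cellT L k}) : {set chain k.-1} :=
  [set bd f | f in [set f : chain k | is_chain f && (supp f \subset w)]].

Section Measures.
Variable R : realFieldType.
Variable k : nat.
Local Notation Om := {set cellT L k}.

Definition rho_w (x : cellT L k -> R) (w : Om) : R :=
  \prod_(c in w) (x c / (1 - x c)).
Definition rho (x : cellT L k -> R) (w : Om) : R :=
  rho_w x w / \sum_(w' : Om) rho_w x w'.
Definition gamma (eta : chain k) : R :=
  (eta \in Sigma k)%:R / #|Sigma k|%:R.

Definition Pw (x : cellT L k -> R) (w : Om) (eta : chain k) : R :=
  rho x w * gamma eta * (eta \in Sigma_down w)%:R.
Definition Pjoint (x : cellT L k -> R) (w : Om) (eta : chain k) : R :=
  Pw x w eta / \sum_(w' : Om) \sum_(eta' : chain k) Pw x w' eta'.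

Definition margSigma x (eta : chain k) : R := \sum_(w : Om) Pjoint x w eta.
Definition margOmega x (w : Om) : R := \sum_(eta : chain k) Pjoint x w eta.
Definition condOmega x (w : Om) (eta : chain k) : R := Pjoint x w eta / margOmega x w.
Definition condSigma x (eta : chain k) (w : Om) : R := Pjoint x w eta / margSigma x eta.

Definition uniform (A : {set chain k}) (eta : chain k) : R :=
  (eta \in A)%:R / #|A|%:R.

Definition ell_w (x : cellT L k -> R) (eta : chain k) : R :=
  (eta \in Sigma k)%:R * \prod_(c in supp eta) x c.
Definition ell (x : cellT L k -> R) (eta : chain k) : R :=
  ell_w x eta / \sum_(eta' : chain k) ell_w x eta'.

Definition phi_w (p : cellT L k -> R) (w : Om) : R :=
  #|kerbd k.-1|%:R / #|Im_bd w|%:R * \prod_(c in w) (p c / (1 - p c)).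
Definition phi (p : cellT L k -> R) (w : Om) : R :=
  phi_w p w / \sum_(w' : Om) phi_w p w'.

Definition bern (x : cellT L k -> R) (w : Om) : R :=
  \prod_(c in w) x c * \prod_(c in ~: w) (1 - x c).
Definition dirac (S : Om) (w : Om) : R := (w == S)%:R.
Definition union_law (mu nu : Om -> R) (w : Om) : R :=
  \sum_(a : Om) \sum_(b : Om) mu a * nu b * ((a :|: b) == w)%:R.

End Measures.
End Chains.
End Cubical.

(* Main.v *)
Require Import Defs.
From HB Require Import structures.
From mathcomp Require Import all_boot all_order all_algebra.
From mathcomp Require Import perm ring.
Set Implicit Arguments. Unset Strict Implicit. Unset Printing Implicit Defensive.
Import Order.TTheory GRing.Theory Num.Theory.
Local Open Scope ring_scope.
Local Notation orbit := Defs.orbit.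


Section Aut.
Variable V : finType.
Variable j : nat.

Definition acomp (g h : aut j) : aut j :=
  ((g.1 * h.1)%g, [ffun i => addb (h.2 (g.1 i)) (g.2 i)]).
Definition ainv (h : aut j) : aut j :=
  ((h.1^-1)%g, [ffun i => h.2 ((h.1^-1)%g i)]).
Definition aid : aut j := (1%g, [ffun => false]).

Lemma act_comp (s : param V j) g h : act (act s g) h = act s (acomp g h).
Proof.
apply/ffunP => y; rewrite !ffunE; congr (s _); apply/ffunP => i.
by rewrite !ffunE permM addbA.
Qed.

Lemma act_id (s : param V j) : act s aid = s.
Proof.
apply/ffunP => y; rewrite !ffunE; congr (s _); apply/ffunP => i.
by rewrite !ffunE perm1 addbF.
Qed.

Lemma act_inv (s : param V j) h : act (act s h) (ainv h) = s.
Proof.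
rewrite act_comp -[RHS]act_id; apply/ffunP => y; rewrite !ffunE; congr (s _).
apply/ffunP => i; rewrite !ffunE permM permK perm1 addbb; congr addb.
Qed.

Lemma act_inj (s : param V j) g h : injective s -> act s g = act s h -> g = h.
Proof.
move=> si e.
have ex (y : {ffun 'I_j -> bool}) : [ffun i => addb (y (g.1 i)) (g.2 i)] = [ffun i => addb (y (h.1 i)) (h.2 i)] :> {ffun 'I_j -> bool}.
  by apply: si; move/ffunP: e => /(_ y); rewrite !ffunE.
have e2 : g.2 = h.2.
  apply/ffunP => i; move/ffunP: (ex [ffun => false]) => /(_ i); rewrite !ffunE.
  by [].
have e1 : g.1 = h.1.
  apply/permP => i; move/ffunP: (ex [ffun m => m == g.1 i]) => /(_ i).
  rewrite !ffunE eqxx e2 => /addIb/esym/eqP => ->; done.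
by case: g h e1 e2 {ex e} => [g1 g2] [h1 h2] /= -> ->.
Qed.

Lemma sign_prod (R : comRingType) (b : {ffun 'I_j -> bool}) :
  (-1) ^+ #|[set i | b i]| = \prod_i ((-1) ^+ b i : R).
Proof.
rewrite (bigID (fun i => b i)) /= [X in _ * X]big1; last by move=> i /negbTE ->.
rewrite mulr1 (eq_bigr (fun _ => -1)); last by move=> i ->.
by rewrite prodr_const cardsE.
Qed.

Lemma signr_addb (R : ringType) (a b : bool) : (-1) ^+ (a (+) b) = (-1) ^+ a * ((-1) ^+ b : R).
Proof. by case: a; case: b; rewrite /= ?expr1 ?expr0 ?mulr1 ?mul1r ?mulrNN ?mulr1. Qed.

Lemma signE (q : nat) (g : aut j) :
  sign q g = (-1) ^+ odd_perm g.1 * \prod_i ((-1) ^+ g.2 i).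
Proof. by rewrite /sign exprD sign_prod. Qed.

Lemma sign_comp (q : nat) g h : sign q (acomp g h) = sign q g * sign q h.
Proof.
rewrite !signE /acomp /= odd_permM signr_addb.
rewrite (eq_bigr (fun i => (-1) ^+ h.2 (g.1 i) * (-1) ^+ g.2 i)); last first.
  by move=> i _; rewrite ffunE signr_addb.
rewrite big_split /=.
have -> : \prod_i ((-1) ^+ h.2 (g.1 i)) = \prod_i ((-1) ^+ h.2 i) :> 'Z_q.
  by rewrite [RHS](reindex_inj (@perm_inj _ g.1)).
rewrite -!mulrA; congr (_ * _). by rewrite mulrA mulrC.
Qed.

Lemma sign_sq (q : nat) (g : aut j) : sign q g * sign q g = 1.
Proof. by rewrite /sign -exprD -signr_odd addnn odd_double. Qed.

End Aut.

Lemma fibre_card (I J : finType) (M : finZmodType) (A : {set {ffun I -> M}})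
  (phi : {ffun I -> M} -> {ffun J -> M}) :
  0 \in A -> {in A &, forall a b, a - b \in A} ->
  (forall a b, phi (a - b) = phi a - phi b) ->
  #|A| = (#|[set a in A | phi a == 0%R]| * #|phi @: A|)%N.
Proof.
move=> A0 Asub phiB.
have phi0 : phi 0 = 0 by rewrite -(subrr 0) phiB subrr.
have AN a : a \in A -> - a \in A by move=> aA; rewrite -sub0r Asub.
have AD a b : a \in A -> b \in A -> a + b \in A.
  by move=> aA bA; rewrite -{1}[b]opprK Asub // AN.
have phiN a : phi (- a) = - phi a by rewrite -sub0r phiB phi0 sub0r.
have phiD a b : phi (a + b) = phi a + phi b by rewrite -{1}[b]opprK phiB phiN opprK.
rewrite -sum1_card (partition_big_imset phi) /=. rewrite mulnC -sum_nat_const.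
apply: eq_bigr => y /imsetP[a0 a0A ->].
rewrite sum1_card -cardsE.
have -> : [set a in A | phi a == phi a0] = (fun e : {ffun I -> M} => e + a0) @: [set a in A | phi a == 0].
  apply/setP => a; rewrite inE; apply/andP/imsetP.
    case=> aA /eqP e; exists (a - a0); last by rewrite subrK.
    by rewrite inE Asub //= phiB e subrr.
  case=> e; rewrite inE => /andP[eA /eqP pe] ->; split; first by rewrite AD.
  by rewrite phiD pe add0r.
rewrite card_imset //; exact: addIr.
Qed.

Lemma f0E (I:finType)(M:zmodType) x : (0 : {ffun I -> M}) x = 0. Proof. by rewrite ffunE. Qed.
Lemma fBE (I:finType)(M:zmodType) (f g : {ffun I -> M}) x : (f - g) x = f x - g x. Proof. by rewrite !ffunE. Qed.

Lemma pick_inS (T : finType) (A : {set T}) u : [pick x in A] = Some u -> u \in A.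
Proof. by case: pickP => // v vA [<-]. Qed.
Lemma pick_noneS (T : finType) (A : {set T}) u : u \in A -> [pick x in A] = None -> False.
Proof. by move=> uA; case: pickP => // /(_ u); rewrite uA. Qed.

Section Ch.
Variables (V : finType) (q : nat) (L : forall j, {set param V j}).
Hypothesis HL : is_cubical_complex L.
Local Notation ch j := (chain V q j).

Lemma is_chainP j (f : ch j) :
  reflect ((forall s, s \notin L j -> f s = 0) /\
           (forall s g, f (act s g) = sign q g * f s)) (is_chain L f).
Proof.
apply: (iffP andP) => [[/forallP h1 /forallP h2]|[h1 h2]]; split.
- by move=> s sL; move: (h1 s); rewrite sL => /eqP.
- by move=> s g; move/forallP: (h2 s) => /(_ g) /eqP.
- by apply/forallP => s; apply/implyP => /h1 ->.
- by apply/forallP => s; apply/forallP => g; rewrite h2.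
Qed.

Lemma is_chain0 j : is_chain L (0 : ch j).
Proof. by apply/is_chainP; split=> *; rewrite !f0E ?mulr0. Qed.

Lemma is_chainB j (f g : ch j) : is_chain L f -> is_chain L g -> is_chain L (f - g).
Proof.
move=> /is_chainP[f1 f2] /is_chainP[g1 g2]; apply/is_chainP; split.
  by move=> s sL; rewrite fBE f1 // g1 // subrr.
by move=> s h; rewrite !fBE f2 g2 mulrBr.
Qed.

Lemma supp_sub j (f : ch j) (w : {set cellT L j}) :
  reflect (forall c, c \notin w -> forall s, s \in val c -> f s = 0) (supp L f \subset w).
Proof.
apply: (iffP subsetP) => h.
  move=> c cw s sc; apply/eqP/negPn/negP => fs; move/negP: cw; apply.
  by apply: h; rewrite inE; apply/existsP; exists s; rewrite sc.
move=> c; rewrite inE => /existsP[s /andP[sc fs]]; apply/negPn/negP => cw.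
by move/eqP: fs; apply; apply: (h c cw).
Qed.

Lemma supp_subB j (f g : ch j) (w : {set cellT L j}) : supp L f \subset w -> supp L g \subset w ->
  supp L (f - g) \subset w.
Proof.
move=> /supp_sub hf /supp_sub hg; apply/supp_sub => c cw s sc.
by rewrite fBE (hf c cw s sc) (hg c cw s sc) subrr.
Qed.

Lemma supp0 j (w : {set cellT L j}) : supp L (0 : ch j) \subset w.
Proof. by apply/supp_sub => *; rewrite f0E. Qed.

Lemma bdSB j (f g : ch j.+1) : bdS L (f - g) = bdS L f - bdS L g.
Proof.
apply/ffunP => t; rewrite !ffunE -sumrB; apply: eq_bigr => s _.
by rewrite fBE mulrBl.
Qed.

Lemma orbit_id j (s : param V j) : s \in orbit s.
Proof. by apply/imsetP; exists (aid j); rewrite ?act_id. Qed.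

Lemma orbit_sub j (s u : param V j) : u \in orbit s -> orbit u \subset orbit s.
Proof.
move=> /imsetP[g _ ->]; apply/subsetP => v /imsetP[h _ ->].
by rewrite act_comp; apply/imsetP; exists (acomp g h).
Qed.

Lemma orbit_eq j (s u : param V j) : u \in orbit s -> orbit u = orbit s.
Proof.
move=> us; apply/eqP; rewrite eqEsubset orbit_sub //=; apply: orbit_sub.
by case/imsetP: us => g _ ->; apply/imsetP; exists (ainv g); rewrite ?act_inv.
Qed.

Lemma L_act j (s : param V j) g : (act s g \in L j) = (s \in L j).
Proof.
case: HL => _ H2 _; apply/idP/idP; last exact: H2.
by move=> /(H2 _ _ (ainv g)); rewrite act_inv.
Qed.

Lemma orbit_L j (s : param V j) : s \in L j -> orbit s \subset L j.
Proof. by move=> sL; apply/subsetP => u /imsetP[g _ ->]; rewrite L_act. Qed.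

Lemma cell_spec j (c : cellT L j) : exists2 s, s \in L j & val c = orbit s.
Proof. by case: c => O /= /imsetP[s sL ->]; exists s. Qed.

Lemma cell_L j (c : cellT L j) s : s \in val c -> s \in L j.
Proof. by case: (cell_spec c) => s0 s0L -> sO; apply: (subsetP (orbit_L s0L)). Qed.

Lemma cell_orbit j (c : cellT L j) s : s \in val c -> orbit s = val c.
Proof. by case: (cell_spec c) => s0 s0L -> sO; apply: orbit_eq. Qed.

Definition Phi j (f : ch j) : {ffun cellT L j -> 'Z_q} :=
  finfun (fun c : cellT L j => if [pick u in val c] is Some u then f u else 0 : 'Z_q).
Definition aO j (a : {ffun cellT L j -> 'Z_q}) (O : {set param V j}) : 'Z_q :=
  if (insub O : option (cellT L j)) is Some c then a c else 0.
Definition build j (a : {ffun cellT L j -> 'Z_q}) : ch j :=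
  [ffun t => if t \in L j then
     (if [pick u in orbit t] is Some u then
        (if [pick g : aut j | act u g == t] is Some g then sign q g * aO a (orbit t) else 0)
      else 0) else 0].

Lemma aO_val j a (c : cellT L j) : aO a (val c) = a c.
Proof. by rewrite /aO valK. Qed.

Lemma build_spec j a (t u : param V j) g : t \in L j -> [pick v in orbit t] = Some u ->
  act u g = t -> build a t = sign q g * aO a (orbit t).
Proof.
move=> tL pu e; rewrite ffunE tL pu.
have uL : u \in L j by apply: (subsetP (orbit_L tL)); apply: pick_inS pu.
case: pickP => [g' /eqP e'|/(_ g)]; last by rewrite e eqxx.
case: HL => H1 _ _; have ui := H1 _ _ uL.
by rewrite (act_inj ui (etrans e' (esym e))).
Qed.

Lemma pick_orbit j (s : param V j) : exists2 u, [pick v in orbit s] = Some u &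
  exists g, act u g = s.
Proof.
case pu: [pick v in orbit s] => [u|]; last by case: (pick_noneS (orbit_id s) pu).
exists u => //; have := pick_inS pu => /orbit_eq eu.
by move: (orbit_id s); rewrite -eu => /imsetP[g _ ->]; exists g.
Qed.

Lemma build_chain j a : is_chain L (build a : ch j).
Proof.
apply/is_chainP; split; first by move=> s sL; rewrite ffunE (negbTE sL).
move=> s g; case sL: (s \in L j); last by rewrite !ffunE L_act sL mulr0.
have eo : orbit (act s g) = orbit s by apply: orbit_eq; apply/imsetP; exists g.
case: (pick_orbit s) => u pu [g0 e0].
rewrite (build_spec a sL pu e0) (build_spec (u := u) (g := acomp g0 g) a); first last.
- by rewrite -act_comp e0.
- by rewrite eo.
- by rewrite L_act.
by rewrite eo sign_comp -mulrA mulrCA.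
Qed.

Lemma sign_aid j : sign q (aid j) = 1.
Proof.
rewrite /sign /= odd_perm1 (_ : [set i | _] = set0) ?cards0 //.
by apply/setP => i; rewrite !inE ffunE.
Qed.

Lemma Phi_build j a : Phi (build a : ch j) = a.
Proof.
apply/ffunP => c; rewrite ffunE.
case pc: [pick u in val c] => [u|]; last first.
  by case: (cell_spec c) => s _ e; case: (pick_noneS (u := s) _ pc); rewrite e orbit_id.
have uc := pick_inS pc.
rewrite (build_spec (u := u) (g := aid j) a (cell_L uc)) ?act_id //; last first.
  by rewrite (cell_orbit uc).
by rewrite sign_aid mul1r (cell_orbit uc) aO_val.
Qed.

Lemma Phi_inj j (f g : ch j) : is_chain L f -> is_chain L g -> Phi f = Phi g -> f = g.
Proof.
move=> /is_chainP[f1 f2] /is_chainP[g1 g2] e; apply/ffunP => t.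
case tL: (t \in L j); last by rewrite f1 ?g1 ?tL.
have Pt : orbit t \in cells L j by apply/imsetP; exists t.
move/ffunP: e => /(_ (exist _ (orbit t) Pt)); rewrite !ffunE /=.
case: (pick_orbit t) => u -> [h <-].
by rewrite f2 g2 => ->.
Qed.

Lemma Phi_pffun j (f : ch j) (w : {set cellT L j}) : supp L f \subset w -> Phi f \in pffun_on 0 w predT.
Proof.
move=> /supp_sub h; apply/pffun_onP; split => //.
apply/subsetP => c; rewrite inE; apply: contraR => cw; apply/eqP.
rewrite ffunE; case pc: [pick u in val c] => [u|] //.
exact: (h c cw u (pick_inS pc)).
Qed.

Lemma build_supp j a (w : {set cellT L j}) : a \in pffun_on 0 w predT -> supp L (build a : ch j) \subset w.
Proof.
case/pffun_onP => /subsetP sa _; apply/supp_sub => c cw s sc.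
have ac : a c = 0 by apply/eqP; apply: contraR cw => /sa.
case: (pick_orbit s) => u pu [g e].
by rewrite (build_spec a (cell_L sc) pu e) (cell_orbit sc) aO_val ac mulr0.
Qed.

Lemma card_Cw j (w : {set cellT L j}) :
  #|[set f : ch j | is_chain L f && (supp L f \subset w)]| = (#|'Z_q| ^ #|w|)%N.
Proof.
set C := [set f : ch j | _].
have -> : #|C| = #|@Phi j @: C|.
  apply/esym/card_in_imset => f g; rewrite !inE => /andP[fc _] /andP[gc _].
  exact: Phi_inj.
have -> : @Phi j @: C = [set a in pffun_on 0 w predT].
  apply/setP => a; rewrite inE; apply/imsetP/idP.
    by case=> f; rewrite inE => /andP[_ fs] ->; apply: Phi_pffun.
  move=> ap; exists (build a); last by rewrite Phi_build.
  by rewrite inE build_chain build_supp.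
by rewrite cardsE card_pffun_on.
Qed.

Lemma card_split j (w : {set cellT L j.+1}) :
  (#|Sigma_down q w| * #|Im_bd q w|)%N = (#|'Z_q| ^ #|w|)%N.
Proof.
rewrite -card_Cw (@fibre_card _ _ _ [set f : ch j.+1 | is_chain L f && (supp L f \subset w)] (@bdS V q L j)).
- apply: f_equal2. apply: eq_card => f. rewrite /Sigma_down /Sigma /kerbd !inE /= andbAC. done. done.
- by rewrite inE is_chain0 supp0.
- by move=> f g; rewrite !inE => /andP[f1 f2] /andP[g1 g2]; rewrite is_chainB ?supp_subB.
- exact: bdSB.
Qed.

End Ch.



Lemma sum_sets (T : finType) (R : comRingType) (H : T -> bool -> R) :
  \sum_(a : {set T}) \prod_c H c (c \in a) = \prod_c (H c true + H c false).
Proof.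
rewrite (eq_bigr (fun c => \sum_(b : bool) H c b)); last by move=> c _; rewrite big_bool.
rewrite bigA_distr_bigA /=.
rewrite (reindex (fun a : {set T} => [ffun c => c \in a])) /=; last first.
  apply: onW_bij; exists (fun f : {ffun T -> bool} => [set c | f c]).
    by move=> a; apply/setP => c; rewrite inE ffunE.
  by move=> f; apply/ffunP => c; rewrite !ffunE inE.
by apply: eq_bigr => a _; apply: eq_bigr => c _; rewrite ffunE.
Qed.

Lemma prod_nat_bool (T : finType) (R : comRingType) (b : T -> bool) :
  \prod_c ((b c)%:R : R) = ([forall c, b c])%:R.
Proof.
case: (boolP [forall c, b c]) => [/forallP h|/forallPn[c hc]].
  by rewrite big1 // => c _; rewrite h.
by rewrite (bigD1 c) //= (negbTE hc) mul0r.
Qed.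

Lemma sum_ind (T : finType) (R : ringType) (A : {set T}) :
  \sum_t ((t \in A)%:R : R) = #|A|%:R.
Proof.
rewrite (eq_bigr (fun t => if t \in A then 1 else 0)); last by move=> t _; case: (t \in A).
by rewrite -big_mkcond sumr_const.
Qed.

Lemma normalize (I : finType) (R : fieldType) (F G : I -> R) (al : R) i :
  al != 0 -> (forall i, F i = al * G i) ->
  F i / \sum_i0 F i0 = G i / \sum_i0 G i0.
Proof.
move=> al0 hF; rewrite (eq_bigr (fun i0 => al * G i0)); last by move=> ? _; rewrite hF.
by rewrite -mulr_sumr hF invfM mulrACA mulfV // mul1r.
Qed.

Lemma subset_forall (T : finType) (S w : {set T}) :
  (S \subset w) = [forall c, (c \in S) ==> (c \in w)].
Proof.
apply/subsetP/forallP => h c; first by apply/implyP => /h.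
by move=> cS; move/implyP: (h c); apply.
Qed.

Lemma seteq_forall (T : finType) (A B : {set T}) :
  (A == B) = [forall c, (c \in A) == (c \in B)].
Proof.
apply/eqP/forallP => [->|h]; first by move=> c.
by apply/setP => c; apply/eqP.
Qed.

Section Main.
Variables (V : finType) (L : forall j, {set param V j}) (q : nat) (R : realFieldType)
  (j : nat) (x : cellT L j.+1 -> R).
Hypotheses (HL : is_cubical_complex L) (hq : (2 <= q)%N) (hx : forall c, 0 < x c < 1).
Local Notation T := (cellT L j.+1).
Local Notation ch := (chain V q j.+1).
Implicit Types (S w : {set T}) (c : T).

Definition y c := x c / (1 - x c).
Definition rw (w : {set T}) := rho_w x w.
Definition Z := \sum_(w : {set T}) rw w.
Definition c0 : R := (Z * #|Sigma q L j.+1|%:R)^-1.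
Definition g (S : {set T}) := \sum_(w : {set T}) rw w * (S \subset w)%:R.
Definition B (S : {set T}) c := y c + (if c \in S then 0 else 1).
Definition Hg (S : {set T}) c (b : bool) := if b then y c else (if c \in S then 0 else 1).

Lemma x_gt0 c : 0 < x c. Proof. by case/andP: (hx c). Qed.
Lemma x1_gt0 c : 0 < 1 - x c. Proof. by case/andP: (hx c) => _; rewrite subr_gt0. Qed.
Lemma x1_neq0 c : 1 - x c != 0. Proof. by rewrite gt_eqF ?x1_gt0. Qed.
Lemma y_gt0 c : 0 < y c. Proof. by rewrite divr_gt0 ?x_gt0 ?x1_gt0. Qed.

Lemma rwS S w : rw w * (S \subset w)%:R = \prod_c Hg S c (c \in w).
Proof.
rewrite /rw /rho_w big_mkcond subset_forall -prod_nat_bool -big_split /=.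
by apply: eq_bigr => c _; rewrite /Hg; case: (c \in w); case: (c \in S); rewrite /= ?mulr1 ?mul1r ?mulr0.
Qed.

Lemma gE S : g S = \prod_c B S c.
Proof.
rewrite /g (eq_bigr _ (fun w _ => rwS S w)) sum_sets.
by apply: eq_bigr => c _.
Qed.

Lemma B_gt0 S c : 0 < B S c.
Proof. by rewrite /B; case: (c \in S); rewrite ?addr0 ?addr_gt0 ?y_gt0. Qed.

Lemma g_gt0 S : 0 < g S.
Proof. by rewrite gE prodr_gt0 // => c _; apply: B_gt0. Qed.

Definition K := \prod_c (1 - x c)^-1.
Lemma K_neq0 : K != 0.
Proof. by rewrite gt_eqF // prodr_gt0 // => c _; rewrite invr_gt0 x1_gt0. Qed.

Lemma gK S : g S = K * \prod_(c in S) x c.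
Proof.
rewrite gE /K [X in _ * X]big_mkcond -big_split /=; apply: eq_bigr => c _.
rewrite /B /y; have := x1_neq0 c; case: (c \in S) => h; first by rewrite addr0 mulrC.
by field.
Qed.

Lemma Z_eq : Z = g set0.
Proof. by apply: eq_bigr => w _; rewrite sub0set mulr1. Qed.

Lemma bd0 n : bd L (0 : chain V q n) = 0.
Proof.
case: n => [|n] //=; apply/ffunP => t; rewrite !ffunE big1 // => s _.
by rewrite f0E mul0r.
Qed.

Lemma Sig0 : (0 : ch) \in Sigma q L j.+1.
Proof. by rewrite inE is_chain0 bd0 eqxx. Qed.

Lemma Sd0 w : (0 : ch) \in Sigma_down q w.
Proof. by rewrite inE Sig0 supp0. Qed.

Lemma ker0 n : (0 : chain V q n) \in kerbd q L n.
Proof. by rewrite inE is_chain0 bd0 eqxx. Qed.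

Lemma c0_gt0 : 0 < c0.
Proof.
rewrite invr_gt0 mulr_gt0 ?Z_eq ?g_gt0 // ltr0n.
by apply/card_gt0P; exists 0; apply: Sig0.
Qed.
Lemma c0_neq0 : c0 != 0. Proof. by rewrite gt_eqF ?c0_gt0. Qed.

Lemma rw_gt0 w : 0 < rw w.
Proof. by rewrite /rw /rho_w prodr_gt0 // => c _; apply: y_gt0. Qed.
Lemma rw_neq0 w : rw w != 0. Proof. by rewrite gt_eqF ?rw_gt0. Qed.

Lemma Sd_gt0 w : (0 < #|Sigma_down q w|)%N.
Proof. by apply/card_gt0P; exists 0; apply: Sd0. Qed.

Lemma PwE w (eta : ch) : Pw x w eta = c0 * (rw w * (eta \in Sigma_down q w)%:R).
Proof.
rewrite /Pw /rho /gamma /c0 -/(rw w) /Z.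
case h: (eta \in Sigma_down q w); last by rewrite !mulr0.
move: (h); rewrite inE => /andP[-> _].
rewrite invfM /rw /= !mulr1; ring.
Qed.

Lemma FE (eta : ch) : eta \in Sigma q L j.+1 ->
  \sum_w Pw x w eta = c0 * g (supp L eta).
Proof.
move=> he; rewrite (eq_bigr _ (fun w _ => PwE w eta)) -mulr_sumr; congr (_ * _).
by apply: eq_bigr => w _; rewrite inE he.
Qed.

Lemma FE0 (eta : ch) : eta \notin Sigma q L j.+1 -> \sum_w Pw x w eta = 0.
Proof.
move=> he; rewrite big1 // => w _; rewrite PwE inE (negbTE he) /=.
by rewrite !mulr0.
Qed.

Lemma F'E w : \sum_(eta : ch) Pw x w eta = c0 * (rw w * #|Sigma_down q w|%:R).
Proof.
rewrite (eq_bigr _ (fun eta _ => PwE w eta)) -mulr_sumr -mulr_sumr.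
by rewrite sum_ind.
Qed.

Definition D := \sum_(w : {set T}) \sum_(eta : ch) Pw x w eta.

Lemma D_gt0 : 0 < D.
Proof.
rewrite /D (bigD1 set0) //= ltr_wpDr ?sumr_ge0 // => [w _|]; last first.
  by rewrite F'E mulr_gt0 ?c0_gt0 // mulr_gt0 ?rw_gt0 // ltr0n Sd_gt0.
by rewrite F'E ltW // mulr_gt0 ?c0_gt0 // mulr_gt0 ?rw_gt0 // ltr0n Sd_gt0.
Qed.
Lemma D_neq0 : D != 0. Proof. by rewrite gt_eqF ?D_gt0. Qed.

Lemma PjointE w (eta : ch) : Pjoint x w eta = Pw x w eta / D.
Proof. by []. Qed.

Lemma margSigmaE (eta : ch) : margSigma x eta = (\sum_w Pw x w eta) / D.
Proof. by rewrite /margSigma mulr_suml. Qed.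

Lemma margOmegaE w : margOmega q x w = (\sum_(eta : ch) Pw x w eta) / D.
Proof. by rewrite /margOmega mulr_suml. Qed.

Lemma partA1 (eta : ch) : margSigma x eta = ell x eta.
Proof.
rewrite margSigmaE /D exchange_big /=.
apply: (@normalize _ _ (fun e : ch => \sum_w Pw x w e) (ell_w x) (c0 * K)).
  by rewrite mulf_neq0 ?c0_neq0 ?K_neq0.
move=> e; rewrite /ell_w; case: (boolP (e \in Sigma q L j.+1)) => he.
  by rewrite FE // gK mul1r mulrA.
by rewrite FE0 // mul0r mulr0.
Qed.

Lemma partA2 w (eta : ch) : condOmega x w eta = uniform R (Sigma_down q w) eta.
Proof.
rewrite /condOmega margOmegaE PjointE F'E PwE /uniform.
have := D_neq0; have := c0_neq0; have := rw_neq0 w.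
have : (#|Sigma_down q w|%:R : R) != 0 by rewrite pnatr_eq0 -lt0n Sd_gt0.
move=> h1 h2 h3 h4; field.
by rewrite h1 h2 h3 h4.
Qed.


Lemma q_neq0 : (q%:R : R) != 0.
Proof. by rewrite pnatr_eq0 -lt0n (leq_trans _ hq). Qed.

Lemma pratio (p : T -> R) : (forall c, x c = p c / (p c + q%:R * (1 - p c))) ->
  forall c, p c / (1 - p c) = q%:R * y c.
Proof.
move=> hp c; have hxc := hp c.
have d0 : p c + q%:R * (1 - p c) != 0.
  apply/negP => /eqP d0; move: (x_gt0 c); rewrite hxc d0 invr0 mulr0 ltxx //.
have p1 : 1 - p c != 0.
  apply/negP => /eqP e; have e' : p c = 1 by apply/eqP; rewrite -subr_eq0 -opprB e oppr0.
  by move: (hx c); rewrite hxc e e' mulr0 addr0 divrr ?unitfE ?oner_eq0 // ltxx andbF.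
have q0 := q_neq0.
rewrite /y hxc; field.
by rewrite d0 p1 addrC addKr mulf_neq0.
Qed.

Lemma card_Zq : #|'Z_q| = q.
Proof. by rewrite card_ord Zp_cast. Qed.

Lemma phiwE (p : T -> R) : (forall c, x c = p c / (p c + q%:R * (1 - p c))) ->
  forall w, phi_w q p w = #|kerbd q L j|%:R * #|Sigma_down q w|%:R * rw w.
Proof.
move=> hp w; rewrite /phi_w /= (eq_bigr _ (fun c _ => pratio hp c)) big_split /=.
rewrite prodr_const.
have -> : (q%:R : R) ^+ #|w| = (#|Sigma_down q w| * #|Im_bd q w|)%:R.
  by rewrite card_split // card_Zq natrX.
rewrite natrM -/(rw w).
have : (0 < #|Sigma_down q w| * #|Im_bd q w|)%N by rewrite card_split // card_Zq expn_gt0 (leq_trans _ hq).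
rewrite muln_gt0 => /andP[_ hI].
have hI' : (#|Im_bd q w|%:R : R) != 0 by rewrite pnatr_eq0 -lt0n.
by rewrite /rw /rho_w /y; field.
Qed.

Lemma ker_neq0 : (#|kerbd q L j|%:R : R) != 0.
Proof. by rewrite pnatr_eq0 -lt0n; apply/card_gt0P; exists 0; apply: ker0. Qed.

Lemma partB1 (p : T -> R) : (forall c, x c = p c / (p c + q%:R * (1 - p c))) ->
  forall w, margOmega q x w = phi q p w.
Proof.
move=> hp w; rewrite margOmegaE /phi /D.
apply: (@normalize _ _ (fun w => \sum_(eta : ch) Pw x w eta) (phi_w q p) (c0 / #|kerbd q L j|%:R)).
  by rewrite mulf_neq0 ?c0_neq0 ?invr_eq0 ?ker_neq0.
move=> w'; rewrite F'E phiwE //.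
have := ker_neq0; move=> h; field; done.
Qed.

Definition Hu S w c (b : bool) := (if b then x c else 1 - x c) * (((b || (c \in S)) == (c \in w))%:R).

Lemma unionE S w : union_law (bern x) (dirac R S) w = \prod_c (Hu S w c true + Hu S w c false).
Proof.
rewrite /union_law -sum_sets; apply: eq_bigr => a _.
rewrite (bigD1 S) //= big1 => [|b hb]; last by rewrite /dirac (negbTE hb) mulr0 mul0r.
rewrite addr0 /dirac eqxx mulr1 /bern big_mkcond [\prod_(c in ~: a) _]big_mkcond seteq_forall -prod_nat_bool -!big_split /=.
apply: eq_bigr => c _; rewrite /Hu in_setC in_setU.
by case: (c \in a); rewrite /= ?mulr1 ?mul1r.
Qed.

Lemma partB2 (eta : ch) : eta \in Sigma q L j.+1 ->
  forall w, condSigma x eta w = union_law (bern x) (dirac R (supp L eta)) w.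
Proof.
move=> he w; set S := supp L eta.
rewrite /condSigma margSigmaE PjointE FE // PwE inE he /=.
have -> : c0 * (rw w * (S \subset w)%:R) / D / (c0 * g S / D) = rw w * (S \subset w)%:R / g S.
  have := D_neq0; have := c0_neq0; have := g_gt0 S => /gt_eqF/negbT h1 h2 h3.
  by field; rewrite h1 h2 h3.
rewrite rwS gE -prodf_div unionE; apply: eq_bigr => c _.
rewrite /Hg /B /Hu; have := x1_neq0 c; have := y_gt0 c => /gt_eqF/negbT yn h1.
case: (c \in w); case: (c \in S); rewrite /= ?mulr1 ?mulr0 ?addr0 ?add0r ?mul0r.
- by rewrite divff // addrC subrK.
- by rewrite /y; field; rewrite h1 addrC subrK oner_eq0.
- done.
- by rewrite /y; field; rewrite h1 addrC subrK oner_eq0.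
Qed.

End Main.

Unset Implicit Arguments.

Theorem proposition4p7 (V : finType) (L : forall j, {set param V j})
    (k q : nat) (R : realFieldType) (x : cellT L k -> R) :
  is_cubical_complex L -> (1 <= k)%N -> (2 <= q)%N ->
  (forall c, 0 < x c < 1) ->
  [/\ (* (a) marginal on Sigma is the q-flow model *)
      (forall eta, eta \in Sigma q L k -> margSigma x eta = ell x eta),
      (* (a) P[. | omega] is uniform on Sigma^down(omega) *)
      (forall w eta, eta \in Sigma q L k ->
         condOmega x w eta = uniform R (Sigma_down q w) eta),
      (* (b) marginal on Omega is the plaquette random-cluster model *)
      (forall p : cellT L k -> R,
         (forall c, x c = p c / (p c + q%:R * (1 - p c))) ->
         forall w, margOmega q x w = phi q p w) &
      (* (b) P[. | eta] = P_x  union  delta_supp(eta) *)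
      (forall eta, eta \in Sigma q L k ->
         forall w, condSigma x eta w = union_law (bern x) (dirac R (supp L eta)) w)].
Proof.
case: k x => [|j] x HL hk hq hx //.
split.
- by move=> eta _; apply: partA1.
- by move=> w eta _; apply: partA2.
- by move=> p hp w; apply: partB1.
- by move=> eta he w; apply: partB2.
Qed.
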